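(* $A\in \kappa\mathbf{CH}$ if and only if $\mathcal{BL}_\kappa(\mathrm{p}\mathcal{H} A) = A$.
   Context: Let $A$ be a meet-semilattice (in the paper, a bounded distributive lattice) and $\kappa$ a regular cardinal. A $\kappa$-join is a join of a set of cardinality $<\kappa$; $A$ is $\kappa$-complete if all $\kappa$-joins exist. $\kappa\mathbf{CH}$ is the class of $\kappa$-complete Heyting lattices. A join $\bigvee S$ existing in $A$ is distributive if $a\wedge\bigvee S=\bigvee\{a\wedge s: s\in S\}$ for all $a\in A$; $A$ is a $\kappa$-frame if it is $\kappa$-complete and every $\kappa$-join is distributive. $\mathcal{BL} A$ (the Bruns-Lakser completion) is the frame of D-ideals of $A$ (downsets closed under distributive joins of their subsets), with $A$ identified with its principal downsets. A relative annihilator of $A$ is $\langle a,b\rangle=\{x\in A: a\wedge x\le b\}$. The proHeyting extension $\mathrm{p}\mathcal{H} A$ is the bounded sublattice of $\mathcal{BL} A$ generated by the relative annihilators of $A$; one has $A\subseteq\mathrm{p}\mathcal{H} A\subseteq\mathcal{BL} A$ and $\mathcal{BL}(\mathrm{p}\mathcal{H} A)$ is identified with $\mathcal{BL} A$. For a meet-semilattice $B$ with $A\le B\le\mathcal{BL} A$, $\mathcal{BL}_\kappa B$ denotes the sub-$\kappa$-frame of $\mathcal{BL} A=\mathcal{BL} B$ generated by $B$. *)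

(* Defs.v *)
From HB Require Import structures.
From mathcomp Require Import all_boot all_order.
Set Implicit Arguments. Unset Strict Implicit. Unset Printing Implicit Defensive.
Import Order.TTheory.
Local Open Scope order_scope.

(* The regular cardinal kappa is represented by a type K : kappa = |K|.
   "X has cardinality < kappa" means: no injection K -> X (classically,
   by cardinal comparability, this is |X| < |K|). *)
Definition lt_card (K X : Type) : Prop := ~ exists f : K -> X, injective f.

Definition regular_cardinal (K : Type) : Prop :=
  (exists f : nat -> K, injective f) /\
  forall (I : Type) (F : I -> Type),
    lt_card K I -> (forall i, lt_card K (F i)) -> lt_card K {i : I & F i}.

Section Lat.
Context {disp : Order.disp_t} {L : tbDistrLatticeType disp}.

Definition is_join (S : L -> Prop) (j : L) : Prop :=
  (forall s, S s -> s <= j) /\ (forall u, (forall s, S s -> s <= u) -> j <= u).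

Definition kappa_complete (K : Type) : Prop :=
  forall S : L -> Prop, lt_card K {x : L | S x} -> exists j, is_join S j.

Definition heyting : Prop :=
  forall a b : L, exists c : L, forall x : L, x <= c <-> a `&` x <= b.

Definition kCH (K : Type) : Prop := kappa_complete K /\ heyting.

Definition distributive_join (S : L -> Prop) (j : L) : Prop :=
  is_join S j /\
  forall a : L, is_join (fun y => exists s, S s /\ y = a `&` s) (a `&` j).

Definition down_set (I : L -> Prop) : Prop :=
  forall x y : L, y <= x -> I x -> I y.

(* D-ideals: the elements of the Bruns-Lakser completion BL L *)
Definition D_ideal (I : L -> Prop) : Prop :=
  down_set I /\
  forall (S : L -> Prop) (j : L),
    (forall s, S s -> I s) -> distributive_join S j -> I j.

Definition rel_ann (a b : L) : L -> Prop := fun x => a `&` x <= b.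

Definition BL_join (Ix : Type) (G : Ix -> L -> Prop) : L -> Prop :=
  fun x => forall I, D_ideal I -> (forall i y, G i y -> I y) -> I x.

Definition BL_top : L -> Prop := fun _ => True.
Definition BL_meet (I J : L -> Prop) : L -> Prop := fun x => I x /\ J x.
Definition BL_bot : L -> Prop := BL_join (fun e : Empty_set => match e with end).
Definition BL_join2 (I J : L -> Prop) : L -> Prop :=
  BL_join (fun b : bool => if b then I else J).

(* families of elements of BL L, taken up to extensional equality of sets *)
Definition ext_closed (S : (L -> Prop) -> Prop) : Prop :=
  forall I J, S I -> (forall x, I x <-> J x) -> S J.

Definition bsublattice_closed (S : (L -> Prop) -> Prop) : Prop :=
  [/\ ext_closed S, S BL_top, S BL_bot,
      (forall I J, S I -> S J -> S (BL_meet I J)) &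
      (forall I J, S I -> S J -> S (BL_join2 I J))].

Definition pH (I : L -> Prop) : Prop :=
  forall S, bsublattice_closed S -> (forall a b, S (rel_ann a b)) -> S I.

Definition kframe_closed (K : Type) (S : (L -> Prop) -> Prop) : Prop :=
  [/\ ext_closed S, S BL_top,
      (forall I J, S I -> S J -> S (BL_meet I J)) &
      (forall (Ix : Type) (G : Ix -> L -> Prop),
          lt_card K Ix -> (forall i, S (G i)) -> S (BL_join G))].

Definition BLk (K : Type) (B : (L -> Prop) -> Prop) (I : L -> Prop) : Prop :=
  forall S, kframe_closed K S -> (forall J, B J -> S J) -> S I.

End Lat.

(* Main.v *)
Require Import Defs.
From mathcomp Require Import all_boot all_order.
From Stdlib Require Import ClassicalEpsilon ProofIrrelevance.
Import Order.TTheory.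
Local Open Scope order_scope.

Section Helpers.
Context {disp : Order.disp_t} {A : tbDistrLatticeType disp}.

Definition princ (a : A) : A -> Prop := fun x => x <= a.

Lemma princ_D (a : A) : D_ideal (princ a).
Proof.
split.
- move=> x y hyx hx; exact: le_trans hyx hx.
- move=> S j hS [[_ hj] _]; exact: hj.
Qed.

Lemma BL_join_principal (Ix : Type) (G : Ix -> A -> Prop) (f : Ix -> A) (j : A) :
  (forall i x, G i x <-> x <= f i) ->
  distributive_join (fun x => exists i, x = f i) j ->
  forall x, BL_join G x <-> x <= j.
Proof.
move=> hG hj x; split.
- move=> hx; apply: (hx (princ j) (princ_D j)).
  move=> i y /hG hy; rewrite /princ; apply: le_trans hy _.
  by case: hj => [[ub _] _]; apply: ub; exists i.
- move=> hxj I [dI cI] hI.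
  apply: (dI j x hxj); apply: (cI _ j _ hj).
  move=> s [i ->]; apply: (hI i); exact/hG.
Qed.

Lemma heyting_dist (S : A -> Prop) (j : A) :
  heyting (L := A) -> is_join S j -> distributive_join S j.
Proof.
move=> hH [ub lub]; split; first by split.
move=> a; split.
- move=> y [s [hs ->]]; apply: leI2 => //; exact: ub.
- move=> u hu; have [c hc] := hH a u.
  apply/hc; apply: lub => s hs; apply/hc; apply: hu; by exists s.
Qed.

Lemma lt_card_image (K Ix : Type) (f : Ix -> A) :
  lt_card K Ix -> lt_card K {x : A | exists i, x = f i}.
Proof.
move=> hI [g ginj]; apply: hI.
exists (fun k => proj1_sig (constructive_indefinite_description _ (proj2_sig (g k)))).
move=> k1 k2; move: (ginj k1 k2) => gi e; apply: gi; move: e.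
case: (g k1) => x1 p1; case: (g k2) => x2 p2 /=.
case: (constructive_indefinite_description _ p1) => i1 /= h1.
case: (constructive_indefinite_description _ p2) => i2 /= h2 e.
have ex : x1 = x2 by rewrite h1 ?h2 e.
move: p1 p2; rewrite ex => p1 p2; by rewrite (proof_irrelevance _ p1 p2).
Qed.

End Helpers.

Theorem theorem4p19 (K : Type) (disp : Order.disp_t)
    (A : tbDistrLatticeType disp) :
  regular_cardinal K ->
  (kCH (L := A) K <->
   forall I : A -> Prop,
     BLk K (@pH disp A) I <-> exists a : A, forall x : A, I x <-> x <= a).
Proof.
move=> _.
have BLk_pH : forall I : A -> Prop, pH I -> BLk K (@pH disp A) I.
  by move=> I hI S _ hS; apply: hS.
have relpH : forall a b : A, pH (rel_ann a b).
  by move=> a b S _ hS; apply: hS.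
have princ_ann : forall a x : A, rel_ann \top a x <-> x <= a.
  by move=> a x; rewrite /rel_ann meet1x.
split.
- move=> [hk hH].
  pose P := fun I : A -> Prop => exists a : A, forall x : A, I x <-> x <= a.
  have Pext : ext_closed P.
    move=> I J [a ha] hIJ; exists a => x; rewrite -hIJ; exact: ha.
  have Pmeet : forall I J, P I -> P J -> P (BL_meet I J).
    move=> I J [a ha] [b hb]; exists (a `&` b) => x.
    by rewrite /BL_meet lexI ha hb; split => [[-> ->]|/andP].
  have Ptop : P BL_top by exists \top => x; split => // _; exact: lex1.
  have Pann : forall a b, P (rel_ann a b).
    move=> a b; have [c hc] := hH a b; exists c => x; by rewrite hc.
  have Pbot : P BL_bot.
    exists \bot; apply: (@BL_join_principal _ _ _ _ (fun e : Empty_set => match e with end)).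
      by case.
    apply: heyting_dist => //; split; first by move=> s [[]].
    move=> u _; exact: le0x.
  have Pjoin2 : forall I J, P I -> P J -> P (BL_join2 I J).
    move=> I J [a ha] [b hb]; exists (a `|` b).
    apply: (@BL_join_principal _ _ _ _ (fun c : bool => if c then a else b)).
      by case.
    apply: heyting_dist => //; split.
      by move=> s [[] ->]; [exact: leUl | exact: leUr].
    move=> u hu; rewrite leUx; apply/andP; split; apply: hu; by [exists true | exists false].
  have PpH : forall I, pH I -> P I.
    move=> I hI; apply: hI => //; by split.
  have Pkf : kframe_closed K P.
    split => //.
    move=> Ix G hIx hG.
    pose f := fun i => proj1_sig (constructive_indefinite_description _ (hG i)).
    have hf : forall i x, G i x <-> x <= f i.
      by move=> i; rewrite /f; case: (constructive_indefinite_description _ (hG i)).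
    have [j hj] := hk _ (@lt_card_image _ _ K Ix f hIx).
    exists j; apply: (@BL_join_principal _ _ _ _ _ _ hf); exact: heyting_dist.
  move=> I; split.
  + move=> hI; exact: (hI P Pkf PpH).
  + move=> [a ha] S [Sext _ _ _] hS.
    apply: (Sext (rel_ann \top a)); first by apply: hS.
    move=> x; rewrite ha; exact: princ_ann.
- move=> hE.
  have BLk_ext : forall I J : A -> Prop, BLk K (@pH disp A) I ->
      (forall x, I x <-> J x) -> BLk K (@pH disp A) J.
    move=> I J hI hIJ S hS hp; case: (hS) => Sext _ _ _.
    exact: (Sext I J (hI S hS hp) hIJ).
  split.
  + move=> S hS.
    pose G := fun (p : {x : A | S x}) (y : A) => y <= proj1_sig p.
    have hGB : forall p, BLk K (@pH disp A) (G p).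
      move=> p; apply/hE; by exists (proj1_sig p).
    have hJ : BLk K (@pH disp A) (BL_join G).
      move=> T hT hp; case: (hT) => _ _ _ Tj; apply: Tj => // p.
      exact: (hGB p T hT hp).
    have [j hj] := (proj1 (hE _) hJ).
    exists j; split.
    * move=> s hs; apply/hj => I _ hI; apply: (hI (exist _ s hs)); exact: le_refl.
    * move=> u hu; have : BL_join G j by apply/hj.
      move=> /(_ (princ u) (princ_D u)); apply => p y hy.
      rewrite /princ; apply: le_trans hy _; apply: hu; exact: proj2_sig p.
  + move=> a b; have [c hc] := proj1 (hE _) (BLk_pH _ (relpH a b)).
    exists c => x; rewrite -hc; by [].
Qed.
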